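(* Let $\lambda_{\max}>1$ and let $F:[0,\lambda_{\max}]\to\mathbb{R}_+$ be continuously differentiable with $F(0)=0$, such that $F(x)<F^\star$ for all $x\in[0,1)$ and $F'(1)>0$. Suppose $x_1^\star\in(1,\lambda_{\max}]$, $x_2^\star\in[0,1)$, $p^\star\in(0,1)$ are such that the measure $\alpha(\{x_1^\star\})=p^\star$, $\alpha(\{x_2^\star\})=1-p^\star$ is an optimal solution of the problem defining $F^\star$. Then for all $x\in[0,\lambda_{\max}]$, $$F(x)\le\frac{F(x_1^\star)-F(x_2^\star)}{x_1^\star-x_2^\star}\,x+\frac{x_1^\star F(x_2^\star)-x_2^\star F(x_1^\star)}{x_1^\star-x_2^\star}.$$
   Context: $F^\star=\sup\{\mathbb{E}_\alpha[F(X)]:\alpha$ a probability measure on $[0,\lambda_{\max}]$, $X\sim\alpha$, $\mathbb{E}_\alpha[X]\le1\}$. *)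

(* Defs.v *)
From HB Require Import structures.
From mathcomp Require Import all_boot all_order all_algebra.
From mathcomp Require Import all_classical all_reals all_analysis.
Set Implicit Arguments. Unset Strict Implicit. Unset Printing Implicit Defensive.
Import Order.TTheory GRing.Theory Num.Theory.
Import numFieldNormedType.Exports.
Local Open Scope classical_set_scope.
Local Open Scope ring_scope.

(* A probability measure alpha on [0, lmax] (represented as a Borel probability
   measure on R concentrated on [0, lmax]) with E_alpha[X] <= 1. *)
Definition I0 (R : realType) (lmax : R) : set R := `[0, lmax]%classic.

Definition feasible (R : realType) (lmax : R) (P : probability R R) : Prop :=
  P (I0 lmax) = 1%E /\
  (\int[P]_(x in I0 lmax) ((x : R)%:E) <= 1%:E)%E.

Definition Fstar (R : realType) (lmax : R) (F : R -> R) : \bar R :=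
  ereal_sup [set (\int[P]_(x in I0 lmax) (F x)%:E)%E
            | P in [set P : probability R R | feasible lmax P]].

(* Main.v *)
Require Import Defs.
From HB Require Import structures.
From mathcomp Require Import all_boot all_order all_algebra.
From mathcomp Require Import all_classical all_reals all_analysis.
From mathcomp Require Import measurable_realfun.
Import Order.TTheory GRing.Theory Num.Theory.
Import numFieldNormedType.Exports.
Local Open Scope classical_set_scope.
Local Open Scope ring_scope.

Section mix3.
Context (R : realType) (a b c : {nonneg R}) (y1 y2 y3 : R).
Hypothesis habc : a%:num + b%:num + c%:num = 1.
Definition mix3 of (a%:num + b%:num + c%:num = 1) : set R -> \bar R := measure_add (measure_add (mscale a (@dirac _ R y1 R)) (mscale b (@dirac _ R y2 R))) (mscale c (@dirac _ R y3 R)).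
HB.instance Definition _ := Measure.on (mix3 habc).
Lemma mix3E A : mix3 habc A = (a%:num%:E * \d_y1 A + b%:num%:E * \d_y2 A + c%:num%:E * \d_y3 A)%E.
Proof. by rewrite /mix3 /measure_add /msum !big_ord_recl big_ord0 /= /msum !big_ord_recl big_ord0 /= !adde0. Qed.
Lemma mix3_setT : mix3 habc setT = 1%E.
Proof. by rewrite mix3E !diracE !in_setT !mule1 -!EFinD habc. Qed.
HB.instance Definition _ := @Measure_isProbability.Build _ _ R (mix3 habc) mix3_setT.
Local Open Scope ereal_scope.
Lemma integral_mix3 (D : set R) (f : R -> \bar R) : measurable D -> measurable_fun D f ->
  (forall x, D x -> 0 <= f x) ->
  \int[mix3 habc]_(x in D) f x = a%:num%:E * (\d_y1 D * f y1) + b%:num%:E * (\d_y2 D * f y2) + c%:num%:E * (\d_y3 D * f y3).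
Proof.
move=> mD mf f0.
rewrite /mix3 ge0_integral_measure_add // ge0_integral_measure_add // !ge0_integral_mscale // !integral_dirac //.
Qed.
End mix3.
From mathcomp Require Import ring lra.

Theorem lemmaB1 (R : realType) (lmax : R) (F : R -> R)
  (x1 x2 p : R) :
  1 < lmax ->
  (* F : [0,lmax] -> R_+ continuously differentiable *)
  (forall x, 0 <= x <= lmax -> 0 <= F x) ->
  {within `[0, lmax], continuous F} ->
  (exists F' : R -> R, {within `[0, lmax], continuous F'} /\
     forall x, 0 < x < lmax -> is_derive x 1 F (F' x)) ->
  F 0 = 0 ->
  (forall x, 0 <= x < 1 -> ((F x)%:E < Fstar lmax F)%E) ->
  0 < derive1 F 1 ->
  1 < x1 <= lmax -> 0 <= x2 < 1 -> 0 < p < 1 ->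
  (* the two-point measure p*delta_{x1} + (1-p)*delta_{x2} is optimal:
     it is feasible and attains F^* *)
  p * x1 + (1 - p) * x2 <= 1 ->
  (p * F x1 + (1 - p) * F x2)%:E = Fstar lmax F ->
  forall x, 0 <= x <= lmax ->
    F x <= (F x1 - F x2) / (x1 - x2) * x
           + (x1 * F x2 - x2 * F x1) / (x1 - x2).
Proof.
move=> hl Fge0 Fc _ _ _ _ /andP[hx1 hx1l] /andP[hx20 hx21] /andP[hp0 hp1] hmean hopt x0 /andP[hx00 hx0l].
rewrite leNgt; apply/negP => hlt.
have hd : 0 < x1 - x2 by lra.
have e : (F x1 - F x2) / (x1 - x2) * x0 + (x1 * F x2 - x2 * F x1) / (x1 - x2)
   = ((F x1 - F x2) * x0 + (x1 * F x2 - x2 * F x1)) / (x1 - x2).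
  by field; apply/eqP => h0; lra.
rewrite e ltr_pdivrMr // in hlt.
have hl0 : 0 < lmax by lra.
pose t := p * (1 - p) / lmax.
have ht : 0 < t by rewrite /t divr_gt0 // mulr_gt0 // subr_gt0.
have htl : t * lmax = p * (1 - p) by rewrite /t divfK //; apply/eqP => h0; lra.
have ha : 0 <= p - t * (x0 - x2) by nra.
have hb : 0 <= 1 - p - t * (x1 - x0) by nra.
have hc : 0 <= t * (x1 - x2) by nra.
have habc : (NngNum ha)%:num + (NngNum hb)%:num + (NngNum hc)%:num = 1 by rewrite /=; ring.
pose P := mix3 R _ _ _ x1 x2 x0 habc.
have mI : measurable (I0 lmax) by exact: measurable_itv.
have inI y : 0 <= y <= lmax -> \d_y (I0 lmax) = 1%E :> \bar R.
  by move=> hy; rewrite diracE mem_set // /I0 /= in_itv /= hy.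
have d1 := inI x1 ltac:(apply/andP; split; lra).
have d2 := inI x2 ltac:(apply/andP; split; lra).
have d0 := inI x0 ltac:(apply/andP; split; lra).
have mF : measurable_fun (I0 lmax) (fun x => (F x)%:E).
  apply/(measurable_EFinP _ F).
  exact: subspace_continuous_measurable_fun.
have mid : measurable_fun (I0 lmax) (fun x : R => x%:E).
  apply/(measurable_EFinP _ id).
  exact: measurable_id.
have feas : feasible lmax P.
  split.
    by rewrite /P /= mix3E d1 d2 d0 !mule1 -!EFinD habc.
  rewrite /P integral_mix3 //; last by move=> y; rewrite /I0 /= in_itv /= => /andP[].
  rewrite d1 d2 d0 !mul1e -!EFinM -!EFinD lee_fin /=.
  nra.
have ub : (\int[P]_(x in I0 lmax) (F x)%:E <= Fstar lmax F)%E.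
  by apply: ereal_sup_ubound; exists P.
have F0 : forall y, I0 lmax y -> (0 <= (F y)%:E)%E.
  move=> y; rewrite /I0 /= in_itv /= => hy; rewrite lee_fin; exact: Fge0.
move: ub; rewrite -hopt /P integral_mix3 //.
rewrite d1 d2 d0 !mul1e -!EFinM -!EFinD lee_fin /=.
have hk : 0 < F x0 * (x1 - x2) - ((F x1 - F x2) * x0 + (x1 * F x2 - x2 * F x1)) by lra.
have := mulr_gt0 ht hk.
move=> hpos hle.
have hz : ((p - t * (x0 - x2)) * F x1 + (1 - p - t * (x1 - x0)) * F x2 +
  t * (x1 - x2) * F x0) - (p * F x1 + (1 - p) * F x2) <= 0 by rewrite subr_le0.
have eq : ((p - t * (x0 - x2)) * F x1 + (1 - p - t * (x1 - x0)) * F x2 +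
  t * (x1 - x2) * F x0) - (p * F x1 + (1 - p) * F x2) =
  t * (F x0 * (x1 - x2) - ((F x1 - F x2) * x0 + (x1 * F x2 - x2 * F x1))) by ring.
by move: hz; rewrite eq leNgt hpos.
Qed.
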